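(* Let $S\subseteq 2^E$ be a powerful set with $|E|=n\ge 2$. Then $r_S(E)=n-1$ if and only if $S$ has a star element.
   Context: A set $S\subseteq 2^E$ ($E$ finite) is powerful if for every $X\subseteq E$ the number of members of $S$ contained in $X$ is a power of 2. Its rank function is $r_S(X)=\log_2\big(|S|/|\{Y\in S:Y\subseteq E\setminus X\}|\big)$. An element $e\in E$ is a star of $S$ if there exists $T\subseteq 2^{E\setminus\{e\}}$ such that $S=\{X: X\in T\}\cup\{X\cup\{e\}: X\subseteq E\setminus\{e\},\ X\notin T\}$. *)

(* Defs.v *)
From mathcomp Require Import all_boot.
Set Implicit Arguments. Unset Strict Implicit. Unset Printing Implicit Defensive.

Definition count_in (E : finType) (S : {set {set E}}) (X : {set E}) : nat :=
  #|[set Y in S | Y \subset X]|.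

Definition powerful (E : finType) (S : {set {set E}}) : Prop :=
  forall X : {set E}, exists k : nat, count_in S X = 2 ^ k.

(* r_S(X) = log_2 (|S| / |{Y in S : Y ⊆ E \ X}|).  For a powerful S the
   quotient is an exact power of 2, so nat division and logn 2 are exact. *)
Definition rankS (E : finType) (S : {set {set E}}) (X : {set E}) : nat :=
  logn 2 (#|S| %/ count_in S (~: X)).

Definition is_star (E : finType) (S : {set {set E}}) (e : E) : Prop :=
  exists T : {set {set E}},
    (forall X, X \in T -> e \notin X) /\
    S = T :|: [set X :|: [set e] | X in [set X : {set E} | (e \notin X) && (X \notin T)]].

(* Main.v *)
Require Import Defs.
From mathcomp Require Import all_boot zify.
Set Implicit Arguments. Unset Strict Implicit. Unset Printing Implicit Defensive.

Section P.
Variable E : finType.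
Implicit Types (Y Z G : {set E}) (phi u : {set E} -> nat).

Definition PS phi Z := \sum_(Y in powerset Z) phi Y.

Lemma DEC phi Z c : c \notin Z ->
  PS phi (c |: Z) = PS (fun Y => phi Y + phi (c |: Y)) Z.
Proof.
move=> cZ; rewrite /PS big_split /= (bigID (fun Y => c \in Y)) /= addnC.
congr (_ + _).
  apply: eq_bigl => Y; rewrite !powersetE -(setU1K cZ) subsetD1.
  by rewrite setU1K.
rewrite (reindex_onto (fun Y => c |: Y) (fun Y => Y :\ c)) /=; last first.
  by move=> Y /andP[_ cY]; rewrite setD1K.
apply: eq_bigl => Y; rewrite !powersetE setU11 andbT.
apply/andP/idP.
  move=> [sub /eqP eq]; rewrite -eq; rewrite -(setU1K cZ) subsetD1.
  by rewrite setD11 andbT; apply: subset_trans (subD1set _ _) _.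
move=> YZ; split; first by rewrite setUS.
have cY : c \notin Y by apply: contra cZ; apply: (subsetP YZ).
by rewrite setU1K.
Qed.

Lemma PS_le1 phi Z : (forall Y, phi Y <= 1) -> PS phi Z <= 2 ^ #|Z|.
Proof.
move=> h; rewrite /PS -card_powerset -sum1_card.
by apply: leq_sum => Y _; apply: h.
Qed.

Lemma PS_const1 phi Z : (forall Y, Y \subset Z -> phi Y = 1) -> PS phi Z = 2 ^ #|Z|.
Proof.
move=> h; rewrite /PS -card_powerset -sum1_card.
by apply: eq_bigr => Y; rewrite powersetE => /h.
Qed.

Lemma ONE u (R : {set E}) : (forall Z, Z \subset R -> PS u Z = 2 ^ #|Z|) ->
  forall Y, Y \subset R -> u Y = 1.
Proof.
move=> h.
suff: forall k (Y : {set E}), #|Y| <= k -> Y \subset R -> u Y = 1.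
  by move=> H Y; apply: H (leqnn _).
elim=> [|k IH] Y.
  rewrite leqn0 cards_eq0 => /eqP -> sR.
  have := h _ sR; rewrite /PS powerset0 big_set1 cards0 //.
move=> lek sR.
have := h _ sR; rewrite /PS (bigD1 Y) ?powersetE //=.
have -> : \sum_(i in powerset Y | i != Y) u i = \sum_(i in powerset Y | i != Y) 1.
  apply: eq_bigr => Y' /andP[]; rewrite powersetE => sY nY.
  apply: IH; last exact: subset_trans sY sR.
  have : Y' \proper Y by rewrite properEneq nY.
  by move/proper_card => lt; rewrite -ltnS; apply: leq_trans lt lek.
rewrite sum1_card.
have : #|[pred i in powerset Y | i != Y]| = (2 ^ #|Y|).-1.
  rewrite -card_powerset (cardD1 Y) powersetE subxx /=.
  by apply: eq_card => Z; rewrite !inE andbC.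
move=> ->; have := expn_gt0 2 #|Y|; lia.
Qed.

End P.


Lemma pow_sum_eq a b k : 2 ^ a + 2 ^ b = 2 ^ k -> a = b.
Proof.
wlog ab : a b / a <= b.
  move=> H; case: (leqP a b) => [|/ltnW] h; first exact: H.
  by rewrite addnC => /(H _ _ h) ->.
move=> e; apply/eqP; rewrite eqn_leq ab /=; apply/negP => /negP; rewrite -ltnNge => lt.
have h1 : 2 ^ b < 2 ^ k by rewrite -e; have := expn_gt0 2 a; lia.
have h2 : 2 ^ k < 2 ^ b.+1.
  rewrite -e expnS; have : 2 ^ a < 2 ^ b by rewrite ltn_exp2l.
  lia.
rewrite ltn_exp2l // in h1; rewrite ltn_exp2l // in h2; lia.
Qed.

Lemma pow_range m W k : 2 ^ m + W = 2 ^ k -> W <= 2 * 2 ^ m -> W = 0 \/ W = 2 ^ m.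
Proof.
move=> e le.
have mk : m <= k by rewrite -(leq_exp2l _ _ (isT : 1 < 2)) -e leq_addr.
case: (ltngtP k m.+1) => h.
- have : k = m by lia.
  by move=> km; subst k; left; lia.
- have : 2 ^ m.+2 <= 2 ^ k by rewrite leq_exp2l.
  rewrite !expnS; lia.
- by subst k; right; move: e; rewrite expnS; lia.
Qed.

Lemma pow_lt a m : 2 ^ a < 2 ^ m -> 2 * 2 ^ a <= 2 ^ m.
Proof. by rewrite ltn_exp2l // -expnS leq_exp2l. Qed.


Section Q.
Variable E : finType.
Variable S : {set {set E}}.
Definition s (Y : {set E}) : nat := Y \in S.
Implicit Types (X Y Z : {set E}) (phi : {set E} -> nat) (c e x : E).
Hypothesis pw : forall X, exists k, PS s X = 2 ^ k.

Lemma s_le1 Y : s Y <= 1. Proof. by rewrite /s; case: (Y \in S). Qed.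

Lemma cnt_split Z c : c \notin Z ->
  PS s (c |: Z) = PS s Z + PS (fun Y => s (c |: Y)) Z.
Proof. by move=> cZ; rewrite DEC // /PS big_split. Qed.

Lemma cnt_gt0 Z : 0 < PS s Z.
Proof. by have [k ->] := pw Z; rewrite expn_gt0. Qed.

Lemma PS_ge phi Z Y : Y \subset Z -> phi Y <= PS phi Z.
Proof.
by move=> sY; rewrite /PS (bigD1 Y) ?powersetE //= leq_addr.
Qed.

Lemma PS_le2 phi Z : (forall Y, phi Y <= 2) -> PS phi Z <= 2 * 2 ^ #|Z|.
Proof.
move=> h; rewrite /PS -card_powerset -sum1_card big_distrr /=.
by apply: leq_sum => Y _; rewrite muln1; apply: h.
Qed.

Lemma PS_eq0 phi Z : PS phi Z = 0 -> forall Y, Y \subset Z -> phi Y = 0.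
Proof. by move=> h Y /(PS_ge phi); rewrite h leqn0 => /eqP. Qed.

Lemma PS_full phi Z : (forall Y, phi Y <= 1) -> PS phi Z = 2 ^ #|Z| ->
  forall Y, Y \subset Z -> phi Y = 1.
Proof.
move=> h1 h2.
have e : PS (fun Y => 1 - phi Y) Z + PS phi Z = 2 ^ #|Z|.
  rewrite /PS -big_split /= -card_powerset -sum1_card; apply: eq_bigr => Y _.
  by rewrite subnK.
have e0 : PS (fun Y => 1 - phi Y) Z = 0 by move: e; rewrite h2; lia.
move=> Y sY; have := PS_eq0 e0 sY; have := h1 Y; lia.
Qed.

Lemma ar0 (a b : nat) : a + b = 0 -> a = b. Proof. lia. Qed.
Lemma par (a b R T : nat) : a <= 1 -> b <= 1 -> a + b + 2 * R = 2 * T -> a = b.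
Proof. lia. Qed.
Lemma ar3 (a b c d : nat) : a + b = 1 -> c + d = 1 -> a + c = 1 -> b + d = 1.
Proof. lia. Qed.

Lemma Q n (G : {set E}) : #|G| = n.+1 -> PS s G = 2 ^ n ->
  exists2 e, e \in G & forall Y, Y \subset G :\ e -> s Y + s (e |: Y) = 1.
Proof.
elim: n G => [|n IH] G cG cntG.
  have /cards1P [g GE] : #|G| == 1 by rewrite cG.
  subst G; exists g; first by rewrite inE.
  move=> Y; rewrite setDv subset0 => /eqP ->.
  have := cnt_split (Z:=set0) (c:=g); rewrite inE setU0 cntG => /(_ isT).
  by rewrite /PS powerset0 !big_set1 setU0.

have cntGx x : x \in G -> PS s G = PS s (G :\ x) + PS (fun Y => s (x |: Y)) (G :\ x).
  by move=> xG; rewrite -{1}(setD1K xG) cnt_split // setD11.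
have [x xG cx] : exists2 x, x \in G & 2 ^ n <= PS s (G :\ x).
  case: (boolP [exists x in G, 2 ^ n <= PS s (G :\ x)]) => [/exists_inP [x xG cx]|/exists_inPn hall].
    by exists x.
  exfalso.
  have [x xG] : exists x, x \in G by apply/card_gt0P; rewrite cG.
  have cGx : #|G :\ x| = n.+1 by move: cG; rewrite (cardsD1 x G) xG; lia.
  have [y yGx] : exists y, y \in G :\ x by apply/card_gt0P; rewrite cGx.
  have /setD1P [yx yG] := yGx.
  set G2 := G :\ x :\ y.
  have cG2 : #|G2| = n by move: cGx; rewrite (cardsD1 y (G :\ x)) yGx /G2; lia.
  have xGy : x \in G :\ y by apply/setD1P; split; [rewrite eq_sym|].
  have eGy : G :\ y = x |: G2.
    rewrite -(setD1K xGy); congr (_ |: _); apply/setP => z; rewrite !inE.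
    by rewrite andbCA.
  have eGx : G :\ x = y |: G2 by rewrite setD1K.
  have x2 : x \notin G2 by rewrite !inE eqxx andbF.
  have y2 : y \notin G2 by rewrite !inE eqxx.
  have e1 := cntGx x xG.
  have e2 : PS (fun Y => s (x |: Y)) (G :\ x) =
     PS (fun Y => s (x |: Y)) G2 + PS (fun Y => s (x |: (y |: Y))) G2.
    by rewrite eGx DEC // /PS big_split.
  have e3 : PS s (G :\ y) = PS s G2 + PS (fun Y => s (x |: Y)) G2.
    by rewrite eGy cnt_split.
  have b1 : PS (fun Y => s (x |: (y |: Y))) G2 <= 2 ^ n.
    by rewrite -cG2; apply: PS_le1 => Y; apply: s_le1.
  have g2 := cnt_gt0 G2.
  have [kx ekx] := pw (G :\ x).
  have [ky eky] := pw (G :\ y).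
  have hx : 2 * PS s (G :\ x) <= 2 ^ n by rewrite ekx; apply: pow_lt; rewrite -ekx ltnNge hall.
  have hy : 2 * PS s (G :\ y) <= 2 ^ n by rewrite eky; apply: pow_lt; rewrite -eky ltnNge hall.
  move: cntG; rewrite expnS; lia.
have cGx : #|G :\ x| = n.+1 by move: cG; rewrite (cardsD1 x G) xG; lia.
have ex := cntGx x xG.
have [k ek] := pw (G :\ x).
have kn : n <= k by rewrite -(leq_exp2l _ _ (isT : 1 < 2)) -ek.
have kn2 : k <= n.+1.
  by rewrite -(leq_exp2l _ _ (isT : 1 < 2)) -ek -cntG ex leq_addr.
have [kE|kE] : k = n.+1 \/ k = n by lia.
  exists x => // Y sY.
  have h0 : PS (fun Y => s (x |: Y)) (G :\ x) = 0 by move: ex; rewrite ek kE cntG; lia.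
  rewrite (PS_eq0 h0 sY) (PS_full (phi := s) _ _ sY) //; first exact: s_le1.
  by rewrite ek kE cGx.
subst k.
have [e eGx H1] := IH _ cGx ek.
have /setD1P [ex' eG] := eGx.
set G' := G :\ x :\ e.
have cG' : #|G'| = n by move: cGx; rewrite (cardsD1 e (G :\ x)) eGx /G'; lia.
have xG' : x \notin G' by rewrite !inE eqxx andbF.
have eG' : e \notin G' by rewrite !inE eqxx.
have sG'E Y : Y \subset G' -> [/\ x \notin Y, e \notin Y & Y \subset G].
  rewrite /G' !subsetD1 => /andP[/andP[-> ->] ->]; done.
set w := fun Y => s (x |: Y) + s (x |: (e |: Y)).
set W := PS w.
have w_le2 Y : w Y <= 2 by rewrite /w; have := s_le1 (x |: Y); have := s_le1 (x |: (e |: Y)); lia.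
have f1 Z : Z \subset G' -> PS s (e |: Z) = 2 ^ #|Z|.
  move=> sZ; have [_ eZ _] := sG'E _ sZ.
  rewrite DEC //; apply: PS_const1 => Y sY; apply: H1; exact: subset_trans sY sZ.
have f2 Z : Z \subset G' -> PS s (x |: (e |: Z)) = 2 ^ #|Z| + W Z.
  move=> sZ; have [xZ eZ _] := sG'E _ sZ.
  rewrite cnt_split; last by rewrite !inE negb_or eq_sym ex' xZ.
  by rewrite f1 // DEC.
have f3 Z : Z \subset G' -> W Z = 0 \/ W Z = 2 ^ #|Z|.
  move=> sZ; have [k ek'] := pw (x |: (e |: Z)).
  apply: (pow_range (k := k)); first by rewrite -f2.
  exact: PS_le2.
have GE : G = x |: (e |: G') by rewrite /G' setD1K // setD1K.
have f4 : W G' = 2 ^ n.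
  by move: cntG; rewrite GE f2 ?subxx // cG' expnS; lia.
have setC3 (a b : E) Y : a |: (b |: Y) = b |: (a |: Y) by rewrite setUCA.
have splitx Y : Y \subset G :\ e -> x \in Y -> Y = x |: (Y :\ x) /\ Y :\ x \subset G'.
  move=> sY xY; split; first by rewrite setD1K.
  move: sY; rewrite /G' !subsetD1 => /andP[sYG eY].
  by rewrite (subset_trans (subD1set _ _) sYG) !inE eqxx (negbTE eY) andbF.
have nox Y : Y \subset G :\ e -> x \notin Y -> Y \subset G'.
  by move=> sY xY; move: sY; rewrite /G' !subsetD1 xY => /andP[-> ->].
case: (posnP (w set0)) => [w0|w0]; last first.
  have WZ Z : Z \subset G' -> W Z = 2 ^ #|Z|.
    move=> sZ; case: (f3 _ sZ) => // h.
    by have := PS_ge w (sub0set Z); rewrite -/(W Z) h; lia.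
  have w1 := ONE WZ.
  exists e => // Y sY.
  case: (boolP (x \in Y)) => xY; last exact: H1 (nox _ sY xY).
  have [YE sY'] := splitx _ sY xY; move: (Y :\ x) sY' YE => Y' sY' ->.
  by rewrite setC3; apply: (w1 _ sY').

have f5 : forall Y, Y \subset G' -> s (x |: Y) = s (x |: (e |: Y)).
  suff H : forall k Y, #|Y| <= k -> Y \subset G' -> s (x |: Y) = s (x |: (e |: Y)).
    by move=> Y; apply: H (leqnn _).
  elim=> [|k IHk] Y.
    by rewrite leqn0 cards_eq0 => /eqP -> _; move: w0; rewrite /w; apply: ar0.
  move=> lek sY.
  case: (eqVneq Y set0) => [->|Yn0]; first by move: w0; rewrite /w; apply: ar0.
  have eW : W Y = w Y + 2 * \sum_(Y' in powerset Y | Y' != Y) s (x |: Y').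
    rewrite /W /PS (bigD1 Y) ?powersetE //= big_distrr /=; congr (_ + _).
    apply: eq_bigr => Y' /andP[]; rewrite powersetE => sY' nY.
    have pr : Y' \proper Y by rewrite properEneq nY.
    rewrite /w -IHk; first by rewrite addnn -mul2n.
      by rewrite -ltnS; exact: leq_trans (proper_card pr) lek.
    exact: subset_trans sY' sY.
  have Ypos : 0 < #|Y| by rewrite card_gt0.
  have := s_le1 (x |: Y); have := s_le1 (x |: (e |: Y)).
  case: (f3 _ sY) => h; move: eW; rewrite h /w.
    by move=> h1 h2 h3; apply: (par (T := 0)) h3 h2 _; rewrite muln0; symmetry; exact: h1.
  rewrite -(prednK Ypos) expnS => h1 h2 h3; apply: par h3 h2 _; exact/esym/h1.
have [c cGp wc] : exists2 c, c \in G' & 0 < w [set c].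
  case: (boolP [exists c in G', 0 < w [set c]]) => [/exists_inP [c ? ?]|/exists_inPn hc].
    by exists c.
  exfalso.
  suff : forall k Z, #|Z| <= k -> Z \subset G' -> W Z = 0.
    move/(_ n G'); rewrite cG' leqnn subxx f4 => /(_ isT isT) /eqP.
    by rewrite expn_eq0.
  elim=> [|k IHk] Z.
    by rewrite leqn0 cards_eq0 => /eqP -> _; rewrite /W /PS powerset0 big_set1.
  move=> lek sZ.
  have eWZ : W Z = w Z.
    rewrite /W /PS (bigD1 Z) ?powersetE //= big1 ?addn0 // => Y' /andP[].
    rewrite powersetE => sY nY.
    have pr : Y' \proper Z by rewrite properEneq nY.
    have := PS_ge w (subxx Y'); rewrite -/(W Y') IHk ?(subset_trans sY sZ) //.
      by rewrite leqn0 => /eqP.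
    by rewrite -ltnS; exact: leq_trans (proper_card pr) lek.
  case: (f3 _ sZ) => // h.
  have Z1 : #|Z| <= 1.
    case: (leqP #|Z| 1) => // h3.
    have := w_le2 Z; rewrite -eWZ h => h2.
    have h4 : 2 ^ 2 <= 2 ^ #|Z| by rewrite leq_exp2l.
    by have := leq_trans h4 h2.
  have [Z0|Z1'] : #|Z| = 0 \/ #|Z| = 1 by move: Z1; case: #|Z| => [|[|]]; auto.
    move: h; rewrite eWZ; move/eqP: Z0; rewrite cards_eq0 => /eqP ->.
    by rewrite w0.
  have /cards1P [c ZE] : #|Z| == 1 by rewrite Z1'.
  have cG1 : c \in G' by apply: (subsetP sZ); rewrite ZE set11.
  by move: h (hc c cG1); rewrite eWZ ZE => ->; rewrite expn_gt0.
have sub_c Z0 : Z0 \subset G' :\ c -> [/\ c \notin Z0, c |: Z0 \subset G' & Z0 \subset G'].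
  rewrite subsetD1 => /andP[sZ cZ]; split => //.
  by rewrite subUset sub1set cGp.
set A := PS (fun Y => s (x |: Y)).
have f7 Z0 : Z0 \subset G' :\ c -> A (c |: Z0) = 2 ^ #|Z0|.
  move=> /sub_c [cZ sZ _].
  have Wp : 0 < W (c |: Z0).
    by apply: leq_trans wc (PS_ge w _); rewrite sub1set setU11.
  have WE : W (c |: Z0) = 2 ^ #|Z0|.+1.
    by case: (f3 _ sZ) => h; rewrite h in Wp *; rewrite // cardsU1 cZ.
  have : W (c |: Z0) = 2 * A (c |: Z0).
    rewrite /W /A /PS big_distrr /=; apply: eq_bigr => Y; rewrite powersetE => sY.
    by rewrite /w -f5 ?(subset_trans sY sZ) // addnn -mul2n.
  move=> h; apply/eqP; rewrite -(eqn_pmul2l (isT : 0 < 2)) -h WE expnS //.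
have f8 Z0 : Z0 \subset G' :\ c -> PS s (c |: Z0) = 2 ^ #|Z0|.
  move=> sZ0; have [cZ sZ sZ0'] := sub_c _ sZ0.
  have xcZ : x \notin c |: Z0.
    by apply/negP => /(subsetP sZ); rewrite (negbTE xG').
  have := f7 _ sZ0; rewrite /A => f7'.
  have := cnt_split xcZ; rewrite f7'.
  have [a ea] := pw (c |: Z0); have [b eb] := pw (x |: (c |: Z0)).
  by rewrite ea eb => /esym /pow_sum_eq ->.
have fa : forall Y, Y \subset G' :\ c -> s Y + s (c |: Y) = 1.
  apply: ONE => Z0 sZ0; have [cZ _ _] := sub_c _ sZ0.
  by rewrite -DEC // f8.
have fb : forall Y, Y \subset G' :\ c -> s (x |: Y) + s (x |: (c |: Y)) = 1.
  apply: ONE => Z0 sZ0; have [cZ _ _] := sub_c _ sZ0.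
  have := f7 _ sZ0; rewrite /A => f7'.
  by rewrite -(DEC (fun Y => s (x |: Y))) // f7'.
have cGc : c \in G by have [_ _ /subsetP] := sG'E _ (subxx G'); apply.
exists c => // Y sY.
have [YG cY] : Y \subset G /\ c \notin Y by move: sY; rewrite subsetD1 => /andP[].
set Y0 := Y :\ x :\ e.
have sY0 : Y0 \subset G' :\ c.
  rewrite /Y0 /G' !subsetD1 (subset_trans (subD1set _ _) (subset_trans (subD1set _ _) YG)).
  by rewrite !inE !eqxx /= andbF (negbTE cY) !andbF.
have [_ sc0 s0] := sub_c _ sY0.
case: (boolP (x \in Y)) => xY; case: (boolP (e \in Y)) => eY.
- have -> : Y = x |: (e |: Y0).
    apply/setP => z; rewrite !inE; case: (eqVneq z x) => [->|]; rewrite ?xY //=.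
    by case: (eqVneq z e) => [->|]; rewrite ?eY.
  rewrite -f5 // (setC3 c x) (setC3 c e) -f5 //; exact: fb.
- have -> : Y = x |: Y0.
    apply/setP => z; rewrite !inE; case: (eqVneq z x) => [->|]; rewrite ?xY //=.
    by case: (eqVneq z e) => [->|]; rewrite ?(negbTE eY).
  rewrite (setC3 c x); exact: fb.
- have -> : Y = e |: Y0.
    apply/setP => z; rewrite !inE; case: (eqVneq z e) => [->|]; rewrite ?eY //=.
    by case: (eqVneq z x) => [->|]; rewrite ?(negbTE xY).
  rewrite (setC3 c e); apply: (ar3 (H1 _ s0) (H1 _ sc0) (fa _ sY0)).
- have -> : Y = Y0.
    apply/setP => z; rewrite !inE; case: (eqVneq z e) => [->|]; rewrite ?(negbTE eY) //=.
    by case: (eqVneq z x) => [->|]; rewrite ?(negbTE xY).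
  exact: fa.
Qed.
End Q.


Lemma count_inE (E : finType) (S : {set {set E}}) X : count_in S X = PS (s S) X.
Proof.
rewrite /count_in /PS /s -sum1_card big_mkcond /= [RHS]big_mkcond /=.
apply: eq_bigr => Y _; rewrite inE powersetE.
by case: (Y \subset X); case: (Y \in S).
Qed.

Theorem proposition6 (E : finType) (S : {set {set E}}) (n : nat) :
  #|E| = n -> 2 <= n -> powerful S ->
  (rankS S setT = n - 1 <-> exists e : E, is_star S e).
Proof.
move=> cE n2 pw.
have pw' : forall X, exists k, PS (s S) X = 2 ^ k by move=> X; rewrite -count_inE; apply: pw.
have r0 : count_in S (~: setT) = 1.
  rewrite setCT count_inE /PS powerset0 big_set1.
  have := pw' set0; rewrite /PS powerset0 big_set1 => -[k ek].
  move: ek; rewrite /s; case: (set0 \in S) => //=.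
  by case: k => //= k; rewrite expnS; lia.
have cS : #|S| = PS (s S) setT.
  rewrite -count_inE /count_in; apply: eq_card => Y; rewrite !inE subsetT andbT //.
have rk : rankS S setT = logn 2 (PS (s S) setT).
  by rewrite /rankS r0 divn1 cS.
rewrite rk; split.
- move=> hr.
  have [k ek] := pw' setT.
  move: hr; rewrite ek pfactorK // => kE.
  have cT : #|[set: E]| = (n - 1).+1 by rewrite cardsT cE; lia.
  have [e _ H] := Q pw' cT (etrans ek (congr1 _ kE)).
  exists e; exists [set Y in S | e \notin Y]; split.
    by move=> X; rewrite inE => /andP[].
  apply/setP => Y; rewrite !inE.
  case: (boolP (e \in Y)) => eY; last first.
    rewrite andbT; case: (Y \in S) => //=; apply/esym/negP => /imsetP [X _ YX].
    by move: eY; rewrite YX !inE eqxx orbT.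
  have YE : e |: (Y :\ e) = Y by rewrite setD1K.
  have := H (Y :\ e); rewrite subsetD1 subsetT !inE eqxx /= YE => /(_ isT).
  rewrite andbF /= /s.
  case: (boolP (Y \in S)) => YS /=.
    rewrite addn1 => /eqP; rewrite eqSS => /eqP Y0; apply/esym/imsetP; exists (Y :\ e).
      by rewrite !inE eqxx /=; move: Y0; case: (Y :\ e \in S).
    by rewrite setUC YE.
  rewrite addn0 => Y1; apply/esym/negP => /imsetP [X]; rewrite !inE => /andP[eX XT] YX.
  have XE : Y :\ e = X.
    by rewrite YX setUC setU1K.
  by move: XT Y1; rewrite -XE; case: (Y :\ e \in S) => //=; rewrite !inE eqxx.
- move=> [e]; rewrite /is_star => -[T [hT SE]].
  have Hs : forall Y : {set E}, Y \subset [set: E] :\ e -> s S Y + s S (e |: Y) = 1.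
    move=> Y; rewrite subsetD1 subsetT /= => eY.
    have inT : (Y \in S) = (Y \in T).
      rewrite SE inE; case: (Y \in T) => //=; apply/negP => /imsetP [X _ YX].
      by move: eY; rewrite YX !inE eqxx orbT.
    have inT2 : (e |: Y \in S) = (Y \notin T).
      rewrite SE inE; case: (boolP (Y \in T)) => YT /=.
        apply/negP => /orP [/hT|]; first by rewrite !inE eqxx.
        move=> /imsetP [X]; rewrite !inE => /andP [eX XT] YX.
        have YXe : Y = X by rewrite -(setU1K eY) YX setUC setU1K.
        by move: YT; rewrite YXe (negbTE XT).
      apply/orP; right; apply/imsetP; exists Y; first by rewrite !inE eY YT.
      by rewrite setUC.
    by rewrite /s inT inT2; case: (Y \in T).
  have cT : PS (s S) [set: E] = 2 ^ (n - 1).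
    rewrite -(setD1K (in_setT e)) DEC ?setD11 // PS_const1 //.
    congr (2 ^ _); have := cardsD1 e [set: E]; rewrite in_setT cardsT cE; lia.
  by rewrite cT pfactorK.
Qed.
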